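(* Let $k\ge 0$ and $n\ge 1$ be integers, and let $x=(x_1,x_2)$ and $y=(y_1,y_2)$ be distinct points of $\mathbb{Z}^2$ with $|x_1-y_1|<n-2k$ and $|x_2-y_2|<n-2k$. Then \[\pi_n\big(B_{\mathbb{Z}^2}[x,k]\cap B_{\mathbb{Z}^2}[y,k]\big)=\pi_n\big(B_{\mathbb{Z}^2}[x,k]\big)\cap\pi_n\big(B_{\mathbb{Z}^2}[y,k]\big).\]
   Context: $\mathbb{Z}^2$ carries the $l^1$ metric $d((a,b),(a',b'))=|a-a'|+|b-b'|$, and $B_{\mathbb{Z}^2}[x,k]=\{z\in\mathbb{Z}^2: d(x,z)\le k\}$. $\pi_n:\mathbb{Z}^2\to\mathbb{Z}^2/(n\mathbb{Z}\times n\mathbb{Z})$ is the quotient map reducing both coordinates mod $n$. *)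

(* Defs.v *)
From Stdlib Require Import ZArith.
Open Scope Z_scope.

Definition pt := (Z * Z)%type.

Definition dist1 (p q : pt) : Z := Z.abs (fst p - fst q) + Z.abs (snd p - snd q).

Definition ball (x : pt) (k : Z) : pt -> Prop := fun z => dist1 x z <= k.

(* The quotient Z^2 / (nZ x nZ), represented by canonical residues in
   {0..n-1}^2 (for n >= 1); pi_n reduces both coordinates mod n. *)
Definition pi (n : Z) (p : pt) : pt := (fst p mod n, snd p mod n).

Definition pi_img (n : Z) (A : pt -> Prop) : pt -> Prop :=
  fun c => exists z, A z /\ pi n z = c.

(* Main.v *)
Require Import Defs.
From Stdlib Require Import ZArith Lia.
Open Scope Z_scope.

Lemma mod_close (a b n : Z) : 0 < n -> a mod n = b mod n -> Z.abs (a - b) < n -> a = b.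
Proof.
  intros Hn Hm Hab.
  pose proof (Z.div_mod a n ltac:(lia)) as Ha.
  pose proof (Z.div_mod b n ltac:(lia)) as Hb.
  set (q1 := a / n) in *. set (q2 := b / n) in *.
  assert (E : a - b = n * (q1 - q2)) by lia.
  assert (q1 = q2).
  { destruct (Z.lt_total q1 q2) as [H|[H|H]]; auto;
    exfalso; rewrite E in Hab; rewrite Z.abs_mul in Hab;
    rewrite (Z.abs_eq n) in Hab by lia; nia. }
  lia.
Qed.

Theorem lemma5p4 (k n : Z) (x y : pt) :
  0 <= k -> 1 <= n -> x <> y ->
  Z.abs (fst x - fst y) < n - 2 * k ->
  Z.abs (snd x - snd y) < n - 2 * k ->
  forall c : pt,
    pi_img n (fun z => ball x k z /\ ball y k z) c <->
    (pi_img n (ball x k) c /\ pi_img n (ball y k) c).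
Proof.
  intros Hk Hn _ H1 H2 c. split.
  - intros [z [[Bx By] Hz]]. split; exists z; auto.
  - intros [[w [Bw Hw]] [u [Bu Hu]]].
    exists w. split; [split|]; auto.
    destruct x as [x1 x2], y as [y1 y2], w as [w1 w2], u as [u1 u2].
    unfold ball, dist1, pi in *; cbn [fst snd] in *.
    rewrite <- Hu in Hw. injection Hw as E1 E2.
    assert (w1 = u1) by (apply (mod_close _ _ n); [lia|auto|clear E1 E2; lia]).
    assert (w2 = u2) by (apply (mod_close _ _ n); [lia|auto|clear E1 E2; lia]).
    subst. lia.
Qed.
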